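(* If $G$ is a $(3,2)$-critical graph that contains at least three odd cycles, then every two distinct odd cycles of $G$ have more than one common vertex.
   Context: All graphs are finite and simple. An odd cycle is a cycle (subgraph) of odd length. For a graph $G$, ${\rm es}_{\chi}(G)$ is the minimum number of edges of $G$ whose removal results in a spanning subgraph $G_1$ with $\chi(G_1)=\chi(G)-1$. $G$ is edge-stability critical if ${\rm es}_{\chi}(G-e)<{\rm es}_{\chi}(G)$ for every edge $e$. $G$ is $(3,2)$-critical if it is edge-stability critical with $\chi(G)=3$ and ${\rm es}_{\chi}(G)=2$. *)

(* Defs.v *)
From mathcomp Require Import all_boot.
Set Implicit Arguments. Unset Strict Implicit. Unset Printing Implicit Defensive.

(* A finite simple graph on vertex type T is given by its edge set
   E : {set {set T}}, every edge being a 2-element subset of T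
   (this is required as a hypothesis, see [simple_graph]).
   Spanning subgraphs are subsets F of E. *)

Definition simple_graph (T : finType) (E : {set {set T}}) : Prop :=
  forall e, e \in E -> #|e| = 2.

Definition adj (T : finType) (E : {set {set T}}) : rel T :=
  fun x y => [set x; y] \in E.

Definition colorable (T : finType) (E : {set {set T}}) (k : nat) : bool :=
  [exists f : {ffun T -> 'I_k},
     [forall x, forall y, adj E x y ==> (f x != f y)]].

(* chromatic number: least k such that E is k-colourable
   (#|T| colours always suffice, so the bound #|T| is harmless) *)
Definition chi (T : finType) (E : {set {set T}}) : nat :=
  \big[minn/#|T|]_(k < #|T|.+1 | colorable E k) k.

(* es_chi: least number of edges whose removal gives a spanning subgraph
   of chromatic number chi - 1.  The default #|E|.+1 is only used when
   no such subgraph exists (never the case for the graphs considered). *)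
Definition es_chi (T : finType) (E : {set {set T}}) : nat :=
  \big[minn/#|E|.+1]_(F : {set {set T}} |
        (F \subset E) && (chi F == (chi E).-1)) #|E :\: F|.

Definition edge_stability_critical (T : finType) (E : {set {set T}}) : Prop :=
  forall e, e \in E -> es_chi (E :\ e) < es_chi E.

Definition critical32 (T : finType) (E : {set {set T}}) : Prop :=
  [/\ edge_stability_critical E, chi E = 3 & es_chi E = 2].

(* An odd cycle (as a subgraph) is represented by its edge set: the edges
   {x, next s x} of a cyclic sequence s of distinct vertices of odd
   length >= 3 with consecutive vertices adjacent in E. *)
Definition cycle_edges (T : finType) (s : seq T) : {set {set T}} :=
  [set [set x; next s x] | x in s].

Definition odd_cycle (T : finType) (E : {set {set T}}) (C : {set {set T}}) : Prop :=
  exists s : seq T, [/\ uniq s, odd (size s), 3 <= size s,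
                       cycle (adj E) s & C = cycle_edges s].

Definition verts (T : finType) (C : {set {set T}}) : {set T} :=
  \bigcup_(e in C) e.

(* Main.v *)
Require Import Defs.
From mathcomp Require Import all_boot.
Set Implicit Arguments. Unset Strict Implicit. Unset Printing Implicit Defensive.

Section G.
Variable T : finType.
Implicit Types (E F G : {set {set T}}).

Lemma bigmin_le (I : eqType) (r : seq I) (P : pred I) (f : I -> nat) idx x :
  x \in r -> P x -> \big[minn/idx]_(i <- r | P i) f i <= f x.
Proof.
elim: r => // a r IH; rewrite inE big_cons => /orP [/eqP <- ->|xr Px].
  exact: geq_minl.
case: ifP => _; last exact: IH.
exact: leq_trans (geq_minr _ _) (IH xr Px).
Qed.

Definition loopless G := forall x, [set x] \notin G.

Lemma colorable_mono_k G k k' : colorable G k -> k <= k' -> colorable G k'.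
Proof.
move=> /existsP [f /forallP Hf] kk.
apply/existsP; exists [ffun x => widen_ord kk (f x)].
apply/forallP => x; apply/forallP => y; apply/implyP => Hxy.
rewrite !ffunE; move: (forallP (Hf x) y); rewrite Hxy /=.
by apply: contra => /eqP H; apply/eqP/val_inj; move: H => /(congr1 val).
Qed.

Lemma colorable_sub G G' k : G' \subset G -> colorable G k -> colorable G' k.
Proof.
move=> sub /existsP [f /forallP Hf]; apply/existsP; exists f.
apply/forallP => x; apply/forallP => y; apply/implyP => Hxy.
move: (forallP (Hf x) y) => /implyP; apply; exact: (subsetP sub).
Qed.

Lemma colorable_T G : loopless G -> colorable G #|T|.
Proof.
move=> HL; apply/existsP; exists [ffun x => enum_rank x].
apply/forallP => x; apply/forallP => y; apply/implyP => Hxy.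
rewrite !ffunE; apply: contraNneq (HL x) => /enum_rank_inj Exy.
by move: Hxy; rewrite /adj -Exy setUid.
Qed.

Lemma chi_col G : loopless G -> colorable G (chi G).
Proof.
move=> HL; rewrite /chi; apply: (@big_ind _ (fun x => colorable G x)).
- exact: colorable_T.
- move=> x y Hx Hy; rewrite /minn; by case: ifP.
- by [].
Qed.

Lemma chi_leT G : chi G <= #|T|.
Proof.
rewrite /chi; apply: (@big_ind _ (fun x => x <= #|T|)) => //.
- by move=> x y Hx _; exact: leq_trans (geq_minl _ _) Hx.
- by move=> i _; rewrite -ltnS.
Qed.

Lemma chi_le G k : colorable G k -> chi G <= k.
Proof.
move=> Hk; case: (leqP k #|T|) => Hle; last exact: leq_trans (chi_leT G) (ltnW Hle).
have Hk' : k < #|T|.+1 by [].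
rewrite /chi; exact: (@bigmin_le _ _ (fun i : 'I_#|T|.+1 => colorable G i) (fun i : 'I_#|T|.+1 => nat_of_ord i) #|T| (Ordinal Hk') (mem_index_enum _) Hk).
Qed.


Lemma parity (b : T -> bool) x p :
  path (fun u v => b u != b v) x p -> b (last x p) = odd (size p) (+) b x.
Proof.
elim: p x => [|y q IH] x /=; first by [].
move=> /andP [Hxy Hp]; rewrite (IH y Hp).
have -> : b y = ~~ b x by move: Hxy; case: (b x); case: (b y).
by case: (b x); case: (odd (size q)).
Qed.

Lemma cyc_rel (E C : {set {set T}}) :
  odd_cycle E C -> exists s : seq T, [/\ uniq s, odd (size s), 3 <= size s,
    cycle (fun x y => [set x; y] \in C) s & C = cycle_edges s] /\ cycle (adj E) s.
Proof.
move=> [s [Us Os Ss Cs ->]]; exists s; split => //; split => //.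
apply: (@sub_in_cycle _ (mem s) (frel (next s))); last exact: cycle_next.
move=> x y xs ys /= /eqP <-; rewrite /cycle_edges.
by apply/imsetP; exists x.
by apply/allP.
Qed.

Lemma odd_not2 (E C F : {set {set T}}) :
  odd_cycle E C -> C \subset F -> ~~ colorable F 2.
Proof.
move=> /cyc_rel [s [[Us Os Ss Cs _] _]] sub; apply/negP => /existsP [f /forallP Hf].
pose b := fun v => f v == ord0.
have Cb : cycle (fun u v => b u != b v) s.
  apply: sub_cycle Cs => u v Huv.
  have := forallP (Hf u) v; rewrite /adj (subsetP sub _ Huv) /= /b.
  by case: (f u) => [[|[|?]] ?] //; case: (f v) => [[|[|?]] ?].
case: s Us Os Ss Cs Cb => [|x p] //= _ Os _ _ Cb.
have := parity Cb; rewrite last_rcons size_rcons /= -(negbK (odd (size p))).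
by case: (b x); case: (odd (size p)) Os.
Qed.

Lemma cyc_sub (E C : {set {set T}}) : odd_cycle E C -> C \subset E.
Proof.
move=> [s [Us Os Ss Cs ->]]; apply/subsetP => a /imsetP [x xs ->].
exact: (next_cycle Cs xs).
Qed.


Lemma in_verts (C : {set {set T}}) a v : a \in C -> v \in a -> v \in verts C.
Proof. by move=> aC va; apply/bigcupP; exists a. Qed.

Lemma Zlem (E C C1 C2 : {set {set T}}) (w : T) :
  simple_graph E -> odd_cycle E C ->
  (forall a, a \in C -> (a \in C1) || (a \in C2)) ->
  (forall v, v \in verts C1 -> v \in verts C2 -> v = w) ->
  C \subset C1 \/ C \subset C2.
Proof.
move=> HS HC HC12 Hw.
have CE := cyc_sub HC.
move: HC => /cyc_rel [s [[Us Os Ss Cs HCs] _]].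
pose rel := fun x y => [set x; y] \in C.
pose h := fun v => v \in verts C1.
have K : forall a b, rel a b -> a != w -> b != w -> h a = h b.
  move=> a b Hab aw bw; have a1 : a \in [set a; b] by rewrite !inE eqxx.
  have b1 : b \in [set a; b] by rewrite !inE eqxx orbT.
  case/orP: (HC12 _ Hab) => H.
    by rewrite /h (in_verts H a1) (in_verts H b1).
  rewrite /h; have := in_verts H a1; have := in_verts H b1.
  case: (boolP (a \in verts C1)) => [Ha _ Ha2|_]; first by move: aw; rewrite (Hw _ Ha Ha2) eqxx.
  case: (boolP (b \in verts C1)) => [Hb Hb2 _|//]; by move: bw; rewrite (Hw _ Hb Hb2) eqxx.
have L : forall x q, path rel x q -> all (fun v => v != w) (x :: q) ->
    forall v, v \in x :: q -> h v = h x.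
  move=> x q; elim: q x => [|y q IH] x.
    by move=> _ _ v; rewrite inE => /eqP ->.
  move=> /= /andP [Hxy Hp] /and3P [xw yw Hq] v; rewrite inE => /orP [/eqP -> //|vq].
  rewrite (IH y Hp) ?(K x y) //=; by apply/andP.
have [x [p [Hmem [Hpath [Hnw Hp0]]]]] : exists x p, (forall v, (v \in s) = (v \in x :: p))
    /\ path rel x (rcons p x) /\ w \notin p /\ p != [::].
  case: (boolP (w \in s)) => ws.
    case: (rot_to ws) => i p Hrot; exists w, p; split.
      by move=> v; rewrite -Hrot mem_rot.
    have := Cs; rewrite -(rot_cycle i) Hrot /= => ->; split => //.
    have := Us; rewrite -(rot_uniq i) Hrot /= => /andP [-> _]; split => //.
    by apply/eqP => Hp; move: Ss; rewrite -(size_rot i) Hrot Hp.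
  case: s Us Os Ss Cs HCs ws => [|x p] //= Us _ Ss Cs _ ws; exists x, p; split => //.
  split => //; split; first by apply: contra ws; rewrite inE orbC => ->.
  by case: p Us Ss Cs ws.
move: Hpath; rewrite rcons_path => /andP [Hpath _].
have [c Hc] : exists c, forall v, v \in s -> v != w -> h v = c.
  case: (eqVneq x w) => xw.
    case: p Hmem Hnw Hp0 Hpath => [//|y q] Hmem Hnw _ /= /andP [_ Hpath].
    exists (h y) => v; rewrite Hmem inE => /orP [/eqP ->|vp]; first by rewrite xw eqxx.
    move=> _; apply: (L y q Hpath) => //; apply/allP => z zp; apply: contraNneq Hnw => <-.
    done.
  exists (h x) => v; rewrite Hmem => vp _; apply: (L x p Hpath) => //.
  apply/allP => z /=; rewrite inE => /orP [/eqP -> //|zp]; apply: contraNneq Hnw => <-; done.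
have Hz : forall a, a \in C -> exists z, [/\ z \in a, z != w & h z = c].
  move=> a aC; move: (aC); rewrite HCs => /imsetP [u us Ha].
  have u's : next s u \in s by rewrite mem_next.
  have uu' : u != next s u.
    apply/eqP => E1; move: (HS _ (subsetP CE _ aC)); rewrite Ha -E1 setUid cards1.
    by [].
  case: (eqVneq u w) => uw.
    exists (next s u); split; first by rewrite Ha !inE eqxx orbT.
      by rewrite -uw eq_sym.
    by apply: Hc => //; rewrite -uw eq_sym.
  exists u; split => //; first by rewrite Ha !inE eqxx.
  exact: Hc.
case: c Hc Hz => Hc Hz; [left|right]; apply/subsetP => a aC;
  have [z [za zw hz]] := Hz a aC; case/orP: (HC12 a aC) => // H.
  by move: zw; rewrite (Hw z hz (in_verts H za)) eqxx.
by move: hz; rewrite /h (in_verts H za).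
Qed.


Lemma simple_loopless (E G : {set {set T}}) : simple_graph E -> G \subset E -> loopless G.
Proof.
move=> HS sub x; apply/negP => /(subsetP sub) /HS; by rewrite cards1.
Qed.

Lemma trans (E : {set {set T}}) : simple_graph E -> critical32 E ->
  forall e, e \in E -> exists F : {set {set T}}, [/\ F \subset E :\ e, colorable F 2 &
    forall a b, a \in (E :\ e) :\: F -> b \in (E :\ e) :\: F -> a = b].
Proof.
move=> HS [ESC chi3 es2] e He; have := ESC e He; rewrite es2.
rewrite /es_chi; apply: (@big_ind _ (fun x => x < 2 -> exists F : {set {set T}}, [/\ F \subset E :\ e, colorable F 2 &
    forall a b, a \in (E :\ e) :\: F -> b \in (E :\ e) :\: F -> a = b])).
- rewrite ltnS ltnS leqn0 => /eqP /cards0_eq H0; exists set0; split.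
  + exact: sub0set.
  + by apply/existsP; exists [ffun => ord0]; apply/forallP => x; apply/forallP => y; rewrite /adj inE.
  + by move=> a b; rewrite H0 !inE.
- by move=> x y Hx Hy; rewrite /minn; case: ifP.
- move=> F /andP [sub /eqP Hchi] H2; exists F; split => //.
    have HL : loopless F by apply: simple_loopless HS (subset_trans sub (subD1set _ _)).
    apply: colorable_mono_k (chi_col HL) _; rewrite Hchi.
    have : chi (E :\ e) <= 3.
      apply: chi_le; apply: colorable_sub (subD1set _ _) _; rewrite -chi3.
      exact: chi_col (simple_loopless HS (subxx _)).
    by case: (chi (E :\ e)) => [|[|[|[|]]]].
  move=> a b Ha Hb; move: H2; rewrite ltnS => /card_le1_eqP H1; by rewrite (H1 a b Ha Hb).
Qed.

End G.

Theorem lemma2p6 (T : finType) (E : {set {set T}}) :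
  simple_graph E ->
  critical32 E ->
  (exists C1 C2 C3 : {set {set T}},
      [/\ odd_cycle E C1, odd_cycle E C2 & odd_cycle E C3] /\
      [/\ C1 != C2, C1 != C3 & C2 != C3]) ->
  forall C1 C2 : {set {set T}},
    odd_cycle E C1 -> odd_cycle E C2 -> C1 != C2 ->
    1 < #|verts C1 :&: verts C2|.
Proof.
move=> HS Hcr [D1 [D2 [D3 [[H1 H2 H3] [n12 n13 n23]]]]] C1 C2 HC1 HC2 n.
rewrite ltnNge; apply/negP => Hle.
have disj : forall a, a \in C1 -> a \in C2 -> False.
  move=> a a1 a2; have := HS _ (subsetP (cyc_sub HC1) _ a1) => Ha.
  have : a \subset verts C1 :&: verts C2.
    by apply/subsetP => v va; rewrite inE (in_verts a1 va) (in_verts a2 va).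
  move=> /subset_leq_card; rewrite Ha => H; have := leq_trans H Hle; by [].
have TR := trans HS Hcr.
have miss : forall C F, odd_cycle E C -> colorable F 2 -> exists2 a, a \in C & a \notin F.
  move=> C F HC HF; apply/subsetPn; apply: contraNN (odd_not2 (F := F) HC) _.
  by rewrite HF.
have Y : forall a, a \in E -> (a \in C1) || (a \in C2).
  move=> e He; have [F [sub col eq1]] := TR e He.
  have [a a1 aF] := miss _ _ HC1 col; have [b b2 bF] := miss _ _ HC2 col.
  case: (eqVneq a e) => [<-|ae]; first by rewrite a1.
  case: (eqVneq b e) => [<-|be]; first by rewrite b2 orbT.
  have aE := subsetP (cyc_sub HC1) _ a1; have bE := subsetP (cyc_sub HC2) _ b2.
  have Hab : a = b by apply: eq1; rewrite !inE ?ae ?be ?aF ?bF ?aE ?bE.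
  by case: (disj a a1); rewrite Hab.
have X : forall Ca Cb, odd_cycle E Ca -> odd_cycle E Cb ->
    (forall a, a \in Ca -> a \in Cb -> False) ->
    forall C, odd_cycle E C -> C \subset Ca -> C = Ca.
  move=> Ca Cb HCa HCb dab C HC sub; apply/eqP; rewrite eqEsubset sub /=.
  apply/negP => /negP /subsetPn [e ea eC].
  have eE := subsetP (cyc_sub HCa) _ ea.
  have [F [subF col eq1]] := TR e eE.
  have [b bb bF] := miss _ _ HCb col; have [c cc cF] := miss _ _ HC col.
  have be : b != e by apply/eqP => Hb; apply: (dab e) => //; rewrite -Hb.
  have ce : c != e by apply/eqP => Hc; move: eC; rewrite -Hc cc.
  have bE := subsetP (cyc_sub HCb) _ bb; have cE := subsetP (cyc_sub HC) _ cc.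
  have Hbc : b = c by apply: eq1; rewrite !inE ?ce ?be ?cF ?bF ?cE ?bE.
  by apply: (dab c); [exact: (subsetP sub) | rewrite -Hbc].
have [w Hw] : exists w, forall v, v \in verts C1 -> v \in verts C2 -> v = w.
  case: (set_0Vmem (verts C1 :&: verts C2)) => [H0|[w Hw]].
    move: HC1 => /cyc_rel [[|x s] [[_ _ //]]] _; exists x => v v1 v2.
    by move: (in_set0 v); rewrite -H0 inE v1 v2.
  exists w => v v1 v2; apply: (card_le1_eqP Hle) => //; by rewrite inE v1 v2.
have Q : forall C, odd_cycle E C -> C = C1 \/ C = C2.
  move=> C HC.
  have HC12 : forall a, a \in C -> (a \in C1) || (a \in C2).
    by move=> a aC; apply: Y; exact: (subsetP (cyc_sub HC)).
  case: (Zlem HS HC HC12 Hw) => sub; [left|right].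
    exact: (X C1 C2 HC1 HC2 disj C HC sub).
  by apply: (X C2 C1 HC2 HC1 _ C HC sub) => a a2 a1; exact: (disj a a1 a2).
by case: (Q _ H1) (Q _ H2) (Q _ H3) n12 n13 n23 => -> [] -> [] ->; rewrite ?eqxx.
Qed.
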